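(* There exist an objective $f:\mathbb{R}^d\to\mathbb{R}$ satisfying Assumptions 1 and 2, a stochastic gradient oracle $(F,\mathcal D)$ satisfying Assumption 3, an initial point $x^{(0)}$ and a constant $\epsilon_0>0$ such that for GaSare with an arbitrary subspace optimizer, any sparsity levels $k_\ell<m_\ell n_\ell$, any period $\tau\ge1$, any choice of the maps $\rho_\ell^{(t)}$ (with arbitrary hyperparameters), and every realization of the samples, $\|\nabla f(x^{(t)})\|_2^2\ge\epsilon_0$ for all $t\ge0$.
   Context: Parameters $x=(\mathrm{vec}(X_1)^\top,\dots,\mathrm{vec}(X_{N_L})^\top)^\top\in\mathbb{R}^d$, $X_\ell\in\mathbb{R}^{m_\ell\times n_\ell}$; $f(x)=\mathbb{E}_{\xi\sim\mathcal D}F(x;\xi)$; $\nabla_\ell$ is the gradient w.r.t. $X_\ell$. Assumption 1: $\inf f>-\infty$. Assumption 2: $\nabla f$ is $L$-Lipschitz in $\|\cdot\|_2$. Assumption 3: $\mathbb{E}_\xi[\nabla_\ell F(x;\xi)]=\nabla_\ell f(x)$ and $\mathbb{E}_\xi\|\nabla_\ell F(x;\xi)-\nabla_\ell f(x)\|_F^2\le\sigma_\ell^2$ for all $x,\ell$. GaSare with an arbitrary subspace optimizer: at each $t$ draw $\xi^{(t)}\sim\mathcal D$ independently and set $G_\ell^{(t)}=\nabla_\ell F(x^{(t)};\xi^{(t)})$; if $t\equiv0\pmod\tau$ let $S_\ell^{(t)}$ be a Top-$k_\ell$ mask of $G_\ell^{(t)}$ (the $0/1$ matrix with exactly $k_\ell$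 ones at positions of $k_\ell$ entries of largest absolute value, ties arbitrary), otherwise $S_\ell^{(t)}=S_\ell^{(t-1)}$; update $X_\ell^{(t+1)}=X_\ell^{(t)}+S_\ell^{(t)}\odot\rho_\ell^{(t)}(S_\ell^{(t)}\odot G_\ell^{(t)})$, where $\rho_\ell^{(t)}$ is an arbitrary (possibly stateful) map from $m_\ell\times n_\ell$ matrices to $m_\ell\times n_\ell$ matrices and $\odot$ is the entrywise product. *)

(* Defs.v *)
From mathcomp Require Import all_boot all_order all_algebra.
From mathcomp Require Import reals.
Set Implicit Arguments. Unset Strict Implicit. Unset Printing Implicit Defensive.
Import Order.TTheory GRing.Theory Num.Theory.
Local Open Scope ring_scope.

Section GaSare.
Variable R : realType.
Variable NL : nat.
Variables m n : 'I_NL -> nat.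

(* parameter x = (X_1, ..., X_{N_L}), X_l in R^{m_l x n_l}; R^d with d = sum m_l n_l *)
Definition params := forall l : 'I_NL, 'M[R]_(m l, n l).

Definition padd (x y : params) : params := fun l => x l + y l.
Definition psub (x y : params) : params := fun l => x l - y l.

Definition pinner (x y : params) : R :=
  \sum_(l < NL) \sum_(i < m l) \sum_(j < n l) x l i j * y l i j.
Definition norm2 (x : params) : R := Num.sqrt (pinner x x).

Definition frob_sq p q (A : 'M[R]_(p, q)) : R := \sum_(i < p) \sum_(j < q) A i j ^+ 2.

Definition is_gradient (f : params -> R) (g : params -> params) : Prop :=
  forall x : params, forall e : R, 0 < e -> exists d : R, 0 < d /\
    forall h : params, norm2 h < d ->
      `|f (padd x h) - f x - pinner (g x) h| <= e * norm2 h.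

Definition bounded_below (f : params -> R) : Prop := exists c : R, forall x, c <= f x.

Definition lipschitz_grad (g : params -> params) : Prop :=
  exists L : R, 0 <= L /\ forall x y, norm2 (psub (g x) (g y)) <= L * norm2 (psub x y).

Definition is_distribution (Xi : finType) (p : Xi -> R) : Prop :=
  (forall xi, 0 <= p xi) /\ \sum_(xi : Xi) p xi = 1.

Definition oracle_ok (Xi : finType) (p : Xi -> R) (f : params -> R) (g : params -> params)
    (F : params -> Xi -> R) (GF : params -> Xi -> params) : Prop :=
  is_distribution p /\
  (forall x, \sum_(xi : Xi) p xi * F x xi = f x) /\
  (forall xi, is_gradient (fun x => F x xi) (fun x => GF x xi)) /\
  (forall x (l : 'I_NL), \sum_(xi : Xi) p xi *: GF x xi l = g x l) /\
  (exists sigma : 'I_NL -> R, forall x (l : 'I_NL),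
     \sum_(xi : Xi) p xi * frob_sq (GF x xi l - g x l) <= sigma l ^+ 2).

Definition hadamard p q (A B : 'M[R]_(p, q)) : 'M[R]_(p, q) := map2_mx *%R A B.

Definition topk_mask p q (k : nat) (G S : 'M[R]_(p, q)) : Prop :=
  (forall i j, S i j = 0 \/ S i j = 1) /\
  #|[set ij : 'I_p * 'I_q | S ij.1 ij.2 == 1]| = k /\
  (forall i j i' j', S i j = 1 -> S i' j' = 0 -> `|G i' j'| <= `|G i j|).

Definition gasare_traj (Xi : finType) (GF : params -> Xi -> params) (x0 : params)
    (k : 'I_NL -> nat) (tau : nat)
    (rho : nat -> forall l : 'I_NL, 'M[R]_(m l, n l) -> 'M[R]_(m l, n l))
    (xi : nat -> Xi) (x : nat -> params) (S : nat -> params) : Prop :=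
  x 0%N = x0 /\
  forall t : nat, forall l : 'I_NL,
    let G := GF (x t) (xi t) l in
    ((tau %| t)%N -> topk_mask (k l) G (S t l)) /\
    (~~ (tau %| t)%N -> S t l = S t.-1 l) /\
    x t.+1 l = x t l + hadamard (S t l) (rho t l (hadamard (S t l) G)).

End GaSare.

(* Main.v *)
Require Import Defs.
From mathcomp Require Import all_boot all_order all_algebra.
From mathcomp Require Import reals.
From mathcomp Require Import ring lra.
Import Order.TTheory GRing.Theory Num.Theory.
Local Open Scope ring_scope.

Section Aux.
Variable R : realType.
Variable NL : nat.
Variables m n : 'I_NL -> nat.
Variable hNL : (0 < NL)%N.
Variable hm : forall l, (0 < m l)%N.
Variable hn : forall l, (0 < n l)%N.

Definition l0 : 'I_NL := Ordinal hNL.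
Definition i0 : 'I_(m l0) := Ordinal (hm l0).
Definition j0 : 'I_(n l0) := Ordinal (hn l0).
Definition Ec (l : 'I_NL) (i : 'I_(m l)) (j : 'I_(n l)) : bool :=
  [&& l == l0, val i == 0%N & val j == 0%N].
Definition E : params R m n := fun l => \matrix_(i, j) (@Ec l i j)%:R.
Definition coord (y : params R m n) : R := y l0 i0 j0.

Lemma pinner_ext (u u' v v' : params R m n) :
  (forall l, u l = u' l) -> (forall l, v l = v' l) -> pinner u v = pinner u' v'.
Proof. by move=> hu hv; apply: eq_bigr => l _; rewrite hu hv. Qed.

Lemma pinnerDl (u v y : params R m n) :
  pinner (fun l => u l + v l) y = pinner u y + pinner v y.
Proof.
rewrite /pinner -big_split; apply: eq_bigr => l _ /=.
rewrite -big_split; apply: eq_bigr => i _ /=.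
rewrite -big_split; apply: eq_bigr => j _ /=.
by rewrite mxE mulrDl.
Qed.

Lemma pinnerDr (u x h : params R m n) :
  pinner u (padd x h) = pinner u x + pinner u h.
Proof.
rewrite /pinner -big_split; apply: eq_bigr => l _ /=.
rewrite -big_split; apply: eq_bigr => i _ /=.
rewrite -big_split; apply: eq_bigr => j _ /=.
by rewrite /padd mxE mulrDr.
Qed.

Lemma pinnerZl s (u y : params R m n) :
  pinner (fun l => s *: u l) y = s * pinner u y.
Proof.
rewrite /pinner mulr_sumr; apply: eq_bigr => l _ /=.
rewrite mulr_sumr; apply: eq_bigr => i _ /=.
rewrite mulr_sumr; apply: eq_bigr => j _ /=.
by rewrite mxE mulrA.
Qed.

Lemma pinnerNl (u y : params R m n) :
  pinner (fun l => - u l) y = - pinner u y.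
Proof.
rewrite -mulN1r -pinnerZl; apply: pinner_ext => // l.
by rewrite scaleN1r.
Qed.

Lemma pinnerE y : pinner E y = coord y.
Proof.
rewrite /pinner (bigD1 l0) //= [X in _ + X]big1 ?addr0; last first.
  move=> l hl; apply: big1 => i _; apply: big1 => j _.
  by rewrite mxE /Ec (negbTE hl) mul0r.
rewrite (bigD1 i0) //= [X in _ + X]big1 ?addr0; last first.
  move=> i hi; apply: big1 => j _; rewrite mxE /Ec eqxx /=.
  have -> : (val i == 0%N) = false.
    by apply/negbTE; apply: contra hi => /eqP h; apply/eqP/val_inj.
  by rewrite mul0r.
rewrite (bigD1 j0) //= [X in _ + X]big1 ?addr0; last first.
  move=> j hj; rewrite mxE /Ec eqxx /=.
  have -> : (val j == 0%N) = false.
    by apply/negbTE; apply: contra hj => /eqP h; apply/eqP/val_inj.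
  by rewrite ?andbF mul0r.
by rewrite mxE /Ec !eqxx mul1r.
Qed.

Lemma coord_sq_le y : coord y ^+ 2 <= pinner y y.
Proof.
rewrite /pinner (bigD1 l0) //= -[X in X <= _]addr0 lerD //; last first.
  apply: sumr_ge0 => l _; apply: sumr_ge0 => i _; apply: sumr_ge0 => j _.
  by rewrite -expr2 sqr_ge0.
rewrite (bigD1 i0) //= -[X in X <= _]addr0 lerD //; last first.
  apply: sumr_ge0 => i _; apply: sumr_ge0 => j _.
  by rewrite -expr2 sqr_ge0.
rewrite (bigD1 j0) //= -[X in X <= _]addr0 lerD //; last first.
  by apply: sumr_ge0 => j _; rewrite -expr2 sqr_ge0.
Qed.

Lemma coord_le_norm y : `|coord y| <= norm2 y.
Proof. by rewrite -sqrtr_sqr /norm2; apply: ler_wsqrtr; apply: coord_sq_le. Qed.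

Lemma coordD x h : coord (padd x h) = coord x + coord h.
Proof. by rewrite /coord /padd mxE. Qed.

Lemma coordB x h : coord (psub x h) = coord x - coord h.
Proof. by rewrite /coord /psub !mxE. Qed.

Lemma coordE : coord E = 1.
Proof. by rewrite /coord mxE /Ec !eqxx. Qed.

Definition ff (x : params R m n) : R := coord x ^+ 2.
Definition gg (x : params R m n) : params R m n := fun l => (2 * coord x) *: E l.

Lemma pinner_gg x h : pinner (gg x) h = 2 * coord x * coord h.
Proof. by rewrite /gg pinnerZl pinnerE. Qed.

Lemma ff_diff x h : ff (padd x h) - ff x - pinner (gg x) h = coord h ^+ 2.
Proof. rewrite pinner_gg /ff coordD; ring. Qed.

Lemma sq_bound (h : params R m n) e : norm2 h < e -> coord h ^+ 2 <= e * norm2 h.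
Proof.
move=> he.
have h1 := coord_le_norm h.
have h0 : 0 <= norm2 h by rewrite sqrtr_ge0.
rewrite -(real_normK (num_real (coord h))) expr2.
have H : `|coord h| * `|coord h| <= norm2 h * norm2 h.
  by apply: ler_pM.
apply: le_trans H _.
by apply: ler_wpM2r => //; apply: ltW.
Qed.

Lemma grad_ff : is_gradient ff gg.
Proof.
move=> x e he; exists e; split=> // h hh.
rewrite ff_diff ger0_norm ?sqr_ge0 //; exact: sq_bound.
Qed.

Definition Dm : params R m n := fun l => \matrix_(i, j) (3 * (1 - (@Ec l i j)%:R)).

Definition FF (x : params R m n) (b : bool) : R :=
  ff x + (if b then pinner Dm x else - pinner Dm x).
Definition GG (x : params R m n) (b : bool) : params R m n :=
  fun l => gg x l + (if b then Dm l else - Dm l).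

Lemma grad_FF b : is_gradient (fun x => FF x b) (fun x => GG x b).
Proof.
move=> x e he; exists e; split=> // h hh.
have -> : FF (padd x h) b - FF x b - pinner (GG x b) h = coord h ^+ 2.
  rewrite /FF /GG pinnerDl -(ff_diff x h).
  case: b; rewrite pinnerDr.
    rewrite /=; ring.
  rewrite /= pinnerNl; ring.
rewrite ger0_norm ?sqr_ge0 //; exact: sq_bound.
Qed.

Lemma coordZE s : coord (fun l => s *: E l) = s.
Proof. by rewrite /coord mxE -/(coord E) coordE mulr1. Qed.

Lemma lip_gg : lipschitz_grad gg.
Proof.
exists 2; split => // x y.
set s := 2 * (coord x - coord y).
have hu : forall w, pinner (psub (gg x) (gg y)) w = pinner (fun l => s *: E l) w.
  move=> w; apply: pinner_ext => // l.
  by rewrite /psub /gg /s -scalerBl mulrBr.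
have hc : coord (psub (gg x) (gg y)) = s.
  rewrite coordB /gg !coordZE /s; ring.
rewrite /norm2 hu pinnerZl pinnerE hc -expr2 sqrtr_sqr /s normrM.
rewrite (ger0_norm (_ : 0 <= 2)) // -coordB.
by apply: ler_wpM2l => //; apply: coord_le_norm.
Qed.

Definition half : R := 2^-1.
Lemma halfE : half + half = 1.
Proof. rewrite /half; lra. Qed.

Lemma frobN p q (A : 'M[R]_(p, q)) : frob_sq (- A) = frob_sq A.
Proof.
by apply: eq_bigr => i _; apply: eq_bigr => j _; rewrite mxE sqrrN.
Qed.

Lemma frob_ge0 p q (A : 'M[R]_(p, q)) : 0 <= frob_sq A.
Proof. by apply: sumr_ge0 => i _; apply: sumr_ge0 => j _; apply: sqr_ge0. Qed.

Lemma oracle : oracle_ok (fun _ : bool => half) ff gg FF GG.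
Proof.
split; first by split; [move=> _; rewrite /half invr_ge0 | rewrite big_bool /= halfE].
split; first by move=> x; rewrite big_bool /FF /half /=; lra.
split; first exact: grad_FF.
split.
  move=> x l; rewrite big_bool /GG /= !scalerDr addrACA scalerN subrr addr0.
  by rewrite -scalerDl halfE scale1r.
exists (fun l => Num.sqrt (frob_sq (Dm l))) => x l.
rewrite big_bool /GG /= !(addrC (gg x l)) !addrK frobN -mulrDl halfE mul1r.
by rewrite sqr_sqrtr ?frob_ge0.
Qed.

Lemma Ec0 : @Ec l0 i0 j0.
Proof. by rewrite /Ec !eqxx. Qed.

Lemma topk_avoid x b (k : nat) (Sm : 'M[R]_(m l0, n l0)) :
  coord x = 1 -> (k < m l0 * n l0)%N -> topk_mask k (GG x b l0) Sm -> Sm i0 j0 = 0.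
Proof.
move=> hx hk [h01 [hcard hmax]].
case: (h01 i0 j0) => // hS1; exfalso.
case: (pickP [pred ij : 'I_(m l0) * 'I_(n l0) | Sm ij.1 ij.2 != 1]) => [[i j] /= hij | hall].
  have hS0 : Sm i j = 0 by case: (h01 i j) => // h; rewrite h eqxx in hij.
  have hE : @Ec l0 i j = false.
    apply/negbTE/negP => /and3P [_ /eqP hi /eqP hj].
    have ei : i = i0 by apply: val_inj.
    have ej : j = j0 by apply: val_inj.
    by move: hS0; rewrite ei ej hS1 => /eqP; rewrite oner_eq0.
  have := hmax i0 j0 i j hS1 hS0.
  rewrite /GG /gg hx; case: b {hmax}; rewrite !mxE hE Ec0 /=;
    rewrite ?mulr0 ?mulr1 ?subr0 ?subrr ?add0r ?addr0 ?normrN ?oppr0 ?addr0;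
    rewrite !ger0_norm //; lra.
have hT : [set ij : 'I_(m l0) * 'I_(n l0) | Sm ij.1 ij.2 == 1] = setT.
  apply/setP => ij; rewrite !inE; have := hall ij; rewrite /= => /negbFE ->//.
by move: hcard; rewrite hT cardsT card_prod !card_ord => hc; rewrite hc ltnn in hk.
Qed.

Lemma main_traj (k : 'I_NL -> nat) (hk : forall l, (k l < m l * n l)%N) tau
    (rho : nat -> forall l : 'I_NL, 'M[R]_(m l, n l) -> 'M[R]_(m l, n l))
    (xi : nat -> bool) (x S : nat -> params R m n) :
  gasare_traj GG E k tau rho xi x S -> forall t, coord (x t) = 1 /\ S t l0 i0 j0 = 0.
Proof.
move=> [hx0 hstep].
have hS : forall t, coord (x t) = 1 -> (~~ (tau %| t)%N -> S t.-1 l0 i0 j0 = 0) ->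
    S t l0 i0 j0 = 0.
  move=> t hxt hprev.
  have [h1 [h2 _]] := hstep t l0.
  case: (boolP (tau %| t)%N) => hd.
    have := h1 hd; rewrite /= => h.
    exact: (topk_avoid _ _ _ _ hxt (hk l0) h).
  by rewrite (h2 hd) (hprev hd).
elim=> [|t [IHx IHs]].
  have hx : coord (x 0%N) = 1 by rewrite hx0 coordE.
  split => //; apply: hS => //; by rewrite dvdn0.
have hx : coord (x t.+1) = 1.
  have [_ [_ h3]] := hstep t l0.
  by rewrite /coord h3 !mxE -/(coord (x t)) IHx IHs mul0r addr0.
by split => //; apply: hS.
Qed.

Lemma main_norm x : coord x = 1 -> 1 <= norm2 (gg x) ^+ 2.
Proof.
move=> hx.
have hp : pinner (gg x) (gg x) = 4.
  by rewrite pinner_gg /gg coordZE hx; ring.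
rewrite /norm2 hp sqr_sqrtr //; lra.
Qed.

Lemma main_all :
  exists (f : params R m n -> R) (g : params R m n -> params R m n),
  exists (Xi : finType) (p : Xi -> R) (F : params R m n -> Xi -> R)
         (GF : params R m n -> Xi -> params R m n),
  exists (x0 : params R m n) (eps0 : R),
    is_gradient f g /\ bounded_below f /\ lipschitz_grad g /\
    oracle_ok p f g F GF /\ 0 < eps0 /\
    forall (k : 'I_NL -> nat), (forall l, (k l < m l * n l)%N) ->
    forall (tau : nat), (1 <= tau)%N ->
    forall (rho : nat -> forall l : 'I_NL, 'M[R]_(m l, n l) -> 'M[R]_(m l, n l)),
    forall (xi : nat -> Xi) (x S : nat -> params R m n),
      gasare_traj GF x0 k tau rho xi x S ->
      forall t : nat, eps0 <= norm2 (g (x t)) ^+ 2.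
Proof.
exists ff, gg, bool, (fun _ => half),
  FF, GG, E, 1.
split; first exact: grad_ff.
split; first by exists 0 => x; rewrite /ff sqr_ge0.
split; first exact: lip_gg.
split; first exact: oracle.
split; first by [].
move=> k hk tau htau rho xi x S htr t.
have [hx _] := main_traj _ hk _ _ _ _ _ htr t.
exact: main_norm.
Qed.

End Aux.

Theorem theoremC3 (R : realType) (NL : nat) (m n : 'I_NL -> nat)
    (hNL : (0 < NL)%N) (hm : forall l, (0 < m l)%N) (hn : forall l, (0 < n l)%N) :
  exists (f : params R m n -> R) (g : params R m n -> params R m n),
  exists (Xi : finType) (p : Xi -> R) (F : params R m n -> Xi -> R)
         (GF : params R m n -> Xi -> params R m n),
  exists (x0 : params R m n) (eps0 : R),
    is_gradient f g /\ bounded_below f /\ lipschitz_grad g /\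
    oracle_ok p f g F GF /\ 0 < eps0 /\
    forall (k : 'I_NL -> nat), (forall l, (k l < m l * n l)%N) ->
    forall (tau : nat), (1 <= tau)%N ->
    forall (rho : nat -> forall l : 'I_NL, 'M[R]_(m l, n l) -> 'M[R]_(m l, n l)),
    forall (xi : nat -> Xi) (x S : nat -> params R m n),
      gasare_traj GF x0 k tau rho xi x S ->
      forall t : nat, eps0 <= norm2 (g (x t)) ^+ 2.
Proof. exact: main_all. Qed.
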